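(* Let $\varepsilon>0$, $\Omega\subset\mathbb{R}^2$ bounded open, $u\in\mathcal{SF}_\varepsilon(\Omega)$ and $R\in\mathcal{R}_\varepsilon(u)$. Then the set $$\{u(i): i\in\mathcal{L}_\varepsilon,\ i\in\Gamma\text{ for some }\Gamma\in\mathcal{N}_\varepsilon(u)\text{ with }\Gamma\subset R\}$$ is either empty or consists of exactly two antipodal points of $\mathbb{S}^2$.
   Context: $\mathcal{L}=\{ae_1+b\hat e_2:a,b\in\mathbb{Z}\}$ with $e_1=(1,0)$, $\hat e_2=\frac12(1,\sqrt3)$, $\mathcal{L}_\varepsilon=\varepsilon\mathcal{L}$; $\mathcal{T}_\varepsilon$ is the set of closed triangles with vertices in $\mathcal{L}_\varepsilon$ pairwise at distance $\varepsilon$; $\mathcal{E}_\varepsilon$ the set of segments $[i,j]$, $i,j\in\mathcal{L}_\varepsilon$, $|i-j|=\varepsilon$. $n=(0,0,1)$; $\mathcal{SF}_\varepsilon(\Omega)$ is the set of $u:\mathcal{L}_\varepsilon\to\mathbb{S}^2$ with $u=n$ on $\mathcal{L}_\varepsilon\setminus\Omega$. $\mathcal{N}_\varepsilon(u)=\{[i,j]\in\mathcal{E}_\varepsilon:u(i)=-u(j)\}$. Two triangles of $\mathcal{T}_\varepsilon$ are neighbours if their intersection is an edge in $\mathcal{N}_\varepsilon(u)$, and connected if joined by a finite chain of consecutive neighbours. $\mathcal{R}_\varepsilon(u)$ is the set of admissible interpolation regions: unions of pairwise connected triangles of $\mathcal{T}_\varepsilon$ that are maximal with respect to inclusion. *)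

(* Defs.v *)
From Stdlib Require Import Reals Relations.
Open Scope R_scope.

Definition pt := (R * R)%type.
Definition vec3 := (R * R * R)%type.

Definition dist2 (p q : pt) : R :=
  sqrt ((fst p - fst q)^2 + (snd p - snd q)^2).

Definition norm3 (v : vec3) : R :=
  let '(a, b, c) := v in sqrt (a^2 + b^2 + c^2).
Definition on_sphere (v : vec3) : Prop := norm3 v = 1.
Definition npole : vec3 := (0, 0, 1).
Definition opp3 (v : vec3) : vec3 := let '(a, b, c) := v in (- a, - b, - c).

Definition open2 (O : pt -> Prop) : Prop :=
  forall x, O x -> exists r, 0 < r /\ forall y, dist2 x y < r -> O y.
Definition bounded2 (O : pt -> Prop) : Prop :=
  exists M, forall x, O x -> dist2 x (0, 0) <= M.

(* The lattice L_eps = eps * { a e1 + b e2hat : a b in Z },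
   e1 = (1,0), e2hat = (1/2, sqrt 3 / 2). *)
Definition lat_pt (eps : R) (a b : Z) : pt :=
  (eps * (IZR a + IZR b / 2), eps * (IZR b * sqrt 3 / 2)).
Definition in_lattice (eps : R) (p : pt) : Prop :=
  exists a b : Z, p = lat_pt eps a b.

Definition segment (p q : pt) (x : pt) : Prop :=
  exists t, 0 <= t <= 1 /\
    x = ((1 - t) * fst p + t * fst q, (1 - t) * snd p + t * snd q).
Definition triangle (p q r : pt) (x : pt) : Prop :=
  exists s t w, 0 <= s /\ 0 <= t /\ 0 <= w /\ s + t + w = 1 /\
    x = (s * fst p + t * fst q + w * fst r, s * snd p + t * snd q + w * snd r).

Definition is_tri (eps : R) (T : pt -> Prop) : Prop :=
  exists p q r, in_lattice eps p /\ in_lattice eps q /\ in_lattice eps r /\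
    dist2 p q = eps /\ dist2 q r = eps /\ dist2 p r = eps /\
    forall x, T x <-> triangle p q r x.

(* SF_eps(Omega): u : L_eps -> S^2 with u = n off Omega
   (u is given on all of R^2; only its values on L_eps matter). *)
Definition SF (eps : R) (Omega : pt -> Prop) (u : pt -> vec3) : Prop :=
  (forall i, in_lattice eps i -> on_sphere (u i)) /\
  (forall i, in_lattice eps i -> ~ Omega i -> u i = npole).

Definition in_N (eps : R) (u : pt -> vec3) (G : pt -> Prop) : Prop :=
  exists i j, in_lattice eps i /\ in_lattice eps j /\ dist2 i j = eps /\
    u i = opp3 (u j) /\ forall x, G x <-> segment i j x.

Definition tri_neighbours (eps : R) (u : pt -> vec3) (T1 T2 : pt -> Prop) : Prop :=
  is_tri eps T1 /\ is_tri eps T2 /\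
  exists G, in_N eps u G /\ forall x, (T1 x /\ T2 x) <-> G x.

Definition tri_connected (eps : R) (u : pt -> vec3) : relation (pt -> Prop) :=
  clos_refl_trans (pt -> Prop) (tri_neighbours eps u).

Definition conn_union (eps : R) (u : pt -> vec3) (S : pt -> Prop) : Prop :=
  exists F : (pt -> Prop) -> Prop,
    (forall T, F T -> is_tri eps T) /\
    (forall T1 T2, F T1 -> F T2 -> tri_connected eps u T1 T2) /\
    (forall x, S x <-> exists T, F T /\ T x).

Definition admissible_region (eps : R) (u : pt -> vec3) (Rg : pt -> Prop) : Prop :=
  conn_union eps u Rg /\
  forall S, conn_union eps u S -> (forall x, Rg x -> S x) -> forall x, S x -> Rg x.

(* Main.v *)
Require Import Defs.
From Stdlib Require Import Reals Lra Lia Psatz ZArith Classical.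
Open Scope R_scope.

Definition d2 (p q : pt) : R := (fst p - fst q)^2 + (snd p - snd q)^2.
Definition mid (a b : pt) : pt := ((fst a + fst b)/2, (snd a + snd b)/2).
Definition QR (x y : R) := x*x + x*y + y*y.

Lemma dist2_sq p q e : 0 < e -> dist2 p q = e -> d2 p q = e^2.
Proof. unfold dist2, d2. intros He H. rewrite <- H. rewrite pow2_sqrt; [reflexivity|]. apply Rplus_le_le_0_compat; apply pow2_ge_0. Qed.

Lemma d2_refl p : d2 p p = 0.
Proof. unfold d2; ring. Qed.

Lemma opp3K v : opp3 (opp3 v) = v.
Proof. destruct v as [[a b] c]; simpl; rewrite !Ropp_involutive; reflexivity. Qed.

Lemma d2_lat e a b c d : d2 (lat_pt e a b) (lat_pt e c d) = e^2 * QR (IZR a - IZR c) (IZR b - IZR d).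
Proof.
  unfold d2, lat_pt, QR; simpl.
  assert (H3: sqrt 3 * sqrt 3 = 3) by (apply sqrt_sqrt; lra).
  set (s := sqrt 3) in *.
  transitivity (e^2 * ((IZR a - IZR c)+(IZR b - IZR d)/2)^2 + e^2*(IZR b - IZR d)^2/4 * (s*s)).
  field. rewrite H3. field.
Qed.

Lemma d2_mid e x1 x2 a1 a2 b1 b2 :
  4 * d2 (lat_pt e x1 x2) (mid (lat_pt e a1 a2) (lat_pt e b1 b2)) =
  e^2 * QR (2*IZR x1 - IZR a1 - IZR b1) (2*IZR x2 - IZR a2 - IZR b2).
Proof.
  unfold d2, mid, lat_pt, QR; simpl.
  assert (H3: sqrt 3 * sqrt 3 = 3) by (apply sqrt_sqrt; lra).
  set (s := sqrt 3) in *.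
  transitivity (e^2 * ((2*IZR x1 - IZR a1 - IZR b1)+(2*IZR x2 - IZR a2 - IZR b2)/2)^2
     + e^2*(2*IZR x2 - IZR a2 - IZR b2)^2/4 * (s*s)).
  field. rewrite H3. field.
Qed.

Lemma QR_IZR a b : QR (IZR a) (IZR b) = IZR (a*a+a*b+b*b).
Proof. unfold QR; rewrite !plus_IZR, !mult_IZR; ring. Qed.

Lemma Zmin (x y : Z) : (x*x+x*y+y*y >= 1)%Z \/ (x = 0 /\ y = 0)%Z.
Proof.
  destruct (Z.eq_dec y 0) as [->|Hy].
  - destruct (Z.eq_dec x 0) as [->|Hx]; [right; lia| left; nia].
  - left. nia.
Qed.

Lemma Zmid (a1 a2 b1 b2 x1 x2 : Z) :
  ((a1-b1)*(a1-b1)+(a1-b1)*(a2-b2)+(a2-b2)*(a2-b2) = 1)%Z ->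
  let A := (2*x1-a1-b1)%Z in let B := (2*x2-a2-b2)%Z in
  (A*A + A*B + B*B >= 1)%Z /\
  ((x1 = a1 /\ x2 = a2) \/ (x1 = b1 /\ x2 = b2) \/ (A*A+A*B+B*B >= 3))%Z.
Proof.
  intros H A B.
  remember (a1-b1)%Z as d1. remember (a2-b2)%Z as e1.
  assert (Hd: (-1 <= e1 <= 1 /\ -1 <= d1 <= 1)%Z) by nia.
  destruct (Z_lt_le_dec (A*A+A*B+B*B) 3) as [Hl|Hg].
  2:{ split; [lia| right; right; lia]. }
  assert (HB: (-1 <= B <= 1 /\ -1 <= A <= 1)%Z) by nia.
  assert (HA': A = (2*x1-a1-b1)%Z) by reflexivity.
  assert (HB': B = (2*x2-a2-b2)%Z) by reflexivity.
  clearbody A B.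
  assert (E1: (d1 = -1 \/ d1 = 0 \/ d1 = 1)%Z) by lia.
  assert (E2: (e1 = -1 \/ e1 = 0 \/ e1 = 1)%Z) by lia.
  assert (E3: (A = -1 \/ A = 0 \/ A = 1)%Z) by lia.
  assert (E4: (B = -1 \/ B = 0 \/ B = 1)%Z) by lia.
  destruct E1 as [E1|[E1|E1]]; destruct E2 as [E2|[E2|E2]];
  destruct E3 as [E3|[E3|E3]]; destruct E4 as [E4|[E4|E4]];
  rewrite E1, E2 in H; rewrite ?E3, ?E4 in *; simpl in H |- *; lia.
Qed.

Lemma LMin e x y : 0 < e -> in_lattice e x -> in_lattice e y -> x = y \/ e^2 <= d2 x y.
Proof.
  intros He [x1 [x2 ->]] [y1 [y2 ->]].
  rewrite d2_lat, <- !minus_IZR, QR_IZR.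
  destruct (Zmin (x1-y1) (x2-y2)) as [H|[H1 H2]].
  - right. apply IZR_ge in H. nra.
  - left. assert (x1 = y1) by lia. assert (x2 = y2) by lia. subst; reflexivity.
Qed.

Lemma LM e x a b : 0 < e -> in_lattice e x -> in_lattice e a -> in_lattice e b ->
  d2 a b = e^2 ->
  e^2 <= 4 * d2 x (mid a b) /\ (x = a \/ x = b \/ 3 * e^2 <= 4 * d2 x (mid a b)).
Proof.
  intros He [x1 [x2 ->]] [a1 [a2 ->]] [b1 [b2 ->]] Hab.
  rewrite d2_lat, <- !minus_IZR, QR_IZR in Hab.
  assert (HQ: IZR ((a1 - b1) * (a1 - b1) + (a1 - b1) * (a2 - b2) + (a2 - b2) * (a2 - b2)) = 1) by (apply (Rmult_eq_reg_l (e^2)); [rewrite Hab; ring | apply pow_nonzero; lra]).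
  change 1 with (IZR 1) in HQ. apply eq_IZR in HQ.
  destruct (Zmid a1 a2 b1 b2 x1 x2 HQ) as [H1 H2].
  rewrite d2_mid.
  replace (2 * IZR x1 - IZR a1 - IZR b1) with (IZR (2*x1-a1-b1)) by (rewrite !minus_IZR, mult_IZR; reflexivity).
  replace (2 * IZR x2 - IZR a2 - IZR b2) with (IZR (2*x2-a2-b2)) by (rewrite !minus_IZR, mult_IZR; reflexivity).
  rewrite QR_IZR.
  apply IZR_ge in H1.
  split. { nra. }
  destruct H2 as [[-> ->]|[[-> ->]|H2]]; auto.
  right; right. apply IZR_ge in H2. nra.
Qed.

Lemma LS e i a b : 0 < e -> in_lattice e i -> in_lattice e a -> in_lattice e b ->
  d2 a b = e^2 -> segment a b i -> i = a \/ i = b.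
Proof.
  intros He Hi Ha Hb Hab [t [Ht ->]].
  destruct a as [a1 a2], b as [b1 b2]; cbn [fst snd] in *.
  assert (E1: d2 ((1 - t) * a1 + t * b1, (1 - t) * a2 + t * b2) (a1,a2) = t^2 * e^2).
  { rewrite <- Hab. unfold d2; simpl. ring. }
  assert (E2: d2 ((1 - t) * a1 + t * b1, (1 - t) * a2 + t * b2) (b1,b2) = (1-t)^2 * e^2).
  { rewrite <- Hab. unfold d2; simpl. ring. }
  destruct (LMin e _ _ He Hi Ha) as [H1|H1]; auto.
  destruct (LMin e _ _ He Hi Hb) as [H2|H2]; auto.
  rewrite E1 in H1. rewrite E2 in H2. exfalso.
  assert (1 <= t^2) by nra. assert (1 <= (1-t)^2) by nra. nra.
Qed.

Lemma ID (p q r : pt) s t w : s + t + w = 1 ->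
  let m := (s * fst p + t * fst q + w * fst r, s * snd p + t * snd q + w * snd r) in
  s * d2 p m + t * d2 q m + w * d2 r m = s*t*d2 p q + t*w*d2 q r + s*w*d2 p r.
Proof.
  intros H m. subst m. destruct p as [p1 p2], q as [q1 q2], r as [r1 r2]; unfold d2; simpl.
  replace w with (1 - s - t) by lra. ring.
Qed.

Lemma CL e2 s t w X Y Z : 0 < e2 -> 0 <= s -> 0 <= t -> 0 <= w -> s + t + w = 1 ->
  e2 <= X -> 3 * e2 <= Y -> 3 * e2 <= Z -> s * X + t * Y + w * Z = 4 * e2 * (s*t+t*w+s*w) -> False.
Proof.
  intros. assert (Hp: s + 3*t + 3*w - 4*(s*t+t*w+s*w) > 0).
  { replace w with (1 - s - t) in * by lra. nra. }
  assert (s * X + t * Y + w * Z >= e2 * (s + 3*t + 3*w)) by nra.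
  nra.
Qed.

Lemma K_one {A : Type} e2 (a b p q r : A) s t w Xp Xq Xr : 0 < e2 ->
  0 <= s -> 0 <= t -> 0 <= w -> s + t + w = 1 -> p <> q -> q <> r -> p <> r ->
  e2 <= Xp -> e2 <= Xq -> e2 <= Xr ->
  (p = a \/ p = b \/ 3*e2 <= Xp) -> (q = a \/ q = b \/ 3*e2 <= Xq) -> (r = a \/ r = b \/ 3*e2 <= Xr) ->
  s*Xp + t*Xq + w*Xr = 4*e2*(s*t+t*w+s*w) -> a = p \/ a = q \/ a = r.
Proof.
  intros He Hs Ht Hw Hsum Hpq Hqr Hpr Hp Hq Hr Cp Cq Cr E.
  destruct Cp as [Cp|[Cp|Cp]]; [left; congruence| |];
  (destruct Cq as [Cq|[Cq|Cq]]; [right; left; congruence| |]);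
  (destruct Cr as [Cr|[Cr|Cr]]; [right; right; congruence| |]);
  try (exfalso; congruence); exfalso;
  first [ solve [apply (CL e2 s t w Xp Xq Xr); lra]
        | solve [apply (CL e2 t s w Xq Xp Xr); lra]
        | solve [apply (CL e2 w s t Xr Xp Xq); lra] ].
Qed.

Lemma neq_of_d2 e x y : 0 < e -> d2 x y = e^2 -> x <> y.
Proof. intros He H ->. rewrite d2_refl in H. nra. Qed.

Lemma K e p q r a b : 0 < e -> in_lattice e p -> in_lattice e q -> in_lattice e r ->
  in_lattice e a -> in_lattice e b ->
  d2 p q = e^2 -> d2 q r = e^2 -> d2 p r = e^2 -> d2 a b = e^2 -> Defs.triangle p q r (mid a b) ->
  (a = p \/ a = q \/ a = r) /\ (b = p \/ b = q \/ b = r).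
Proof.
  intros He Lp Lq Lr La Lb Hpq Hqr Hpr Hab [s [t [w [Hs [Ht [Hw [Hsum Hm]]]]]]].
  pose proof (ID p q r s t w Hsum) as I. cbv zeta in I. rewrite <- Hm in I.
  rewrite Hpq, Hqr, Hpr in I.
  assert (E: s * (4 * d2 p (mid a b)) + t * (4 * d2 q (mid a b)) + w * (4 * d2 r (mid a b))
     = 4 * e^2 * (s*t + t*w + s*w)) by (transitivity (4 * (s * d2 p (mid a b) + t * d2 q (mid a b) + w * d2 r (mid a b))); [ring | rewrite I; ring]).
  pose proof (neq_of_d2 e p q He Hpq). pose proof (neq_of_d2 e q r He Hqr).
  pose proof (neq_of_d2 e p r He Hpr).
  assert (He2 : 0 < e^2) by nra.
  destruct (LM e p a b He Lp La Lb Hab) as [Mp Cp].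
  destruct (LM e q a b He Lq La Lb Hab) as [Mq Cq].
  destruct (LM e r a b He Lr La Lb Hab) as [Mr Cr].
  split.
  - apply (K_one (e^2) a b p q r s t w (4*d2 p (mid a b)) (4*d2 q (mid a b)) (4*d2 r (mid a b))); auto.
  - apply (K_one (e^2) b a p q r s t w (4*d2 p (mid a b)) (4*d2 q (mid a b)) (4*d2 r (mid a b))); auto; tauto.
Qed.

Lemma PH (u : pt -> vec3) p q r a b c d : (a=p\/a=q\/a=r) -> (b=p\/b=q\/b=r) ->
  (c=p\/c=q\/c=r) -> (d=p\/d=q\/d=r) -> a <> b -> c <> d ->
  u a = opp3 (u b) -> u c = opp3 (u d) -> u c = u a \/ u c = opp3 (u a).
Proof.
  intros Ha Hb Hc Hd Hab Hcd H1 H2.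
  assert (H1' : u b = opp3 (u a)) by (rewrite H1, opp3K; reflexivity).
  assert (H2' : u d = opp3 (u c)) by (rewrite H2, opp3K; reflexivity).
  destruct Ha as [ -> | [ -> | -> ]]; destruct Hb as [ -> | [ -> | -> ]];
  destruct Hc as [ -> | [ -> | -> ]]; destruct Hd as [ -> | [ -> | -> ]];
  first [ exfalso; congruence | left; congruence | right; congruence ].
Qed.

Lemma mid_seg i j : segment i j (mid i j).
Proof.
  exists (1/2). split; [lra|]. destruct i as [i1 i2], j as [j1 j2]; unfold mid; simpl.
  f_equal; field.
Qed.

Lemma edge_pair e u T a b c d : 0 < e -> is_tri e T ->
  in_lattice e a -> in_lattice e b -> in_lattice e c -> in_lattice e d ->
  d2 a b = e^2 -> d2 c d = e^2 -> u a = opp3 (u b) -> u c = opp3 (u d) ->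
  T (mid a b) -> T (mid c d) -> u c = u a \/ u c = opp3 (u a).
Proof.
  intros He [p [q [r [Lp [Lq [Lr [Dpq [Dqr [Dpr HT]]]]]]]]] La Lb Lc Ld Hab Hcd Ua Uc Ta Tc.
  apply dist2_sq in Dpq, Dqr, Dpr; auto.
  apply HT in Ta, Tc.
  destruct (K e p q r a b He Lp Lq Lr La Lb Dpq Dqr Dpr Hab Ta) as [Ha Hb].
  destruct (K e p q r c d He Lp Lq Lr Lc Ld Dpq Dqr Dpr Hcd Tc) as [Hc Hd].
  apply (PH u p q r a b c d Ha Hb Hc Hd (neq_of_d2 e a b He Hab) (neq_of_d2 e c d He Hcd) Ua Uc).
Qed.

Definition Pv e (u : pt -> vec3) v (T : pt -> Prop) := forall a b, in_lattice e a -> in_lattice e b ->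
  d2 a b = e^2 -> u a = opp3 (u b) -> T (mid a b) -> u a = v \/ u a = opp3 v.

Lemma Pv_of e u T a b : 0 < e -> is_tri e T -> in_lattice e a -> in_lattice e b ->
  d2 a b = e^2 -> u a = opp3 (u b) -> T (mid a b) -> Pv e u (u a) T.
Proof.
  intros He HT La Lb Hab Ua Ta c d Lc Ld Hcd Uc Tc.
  exact (edge_pair e u T a b c d He HT La Lb Lc Ld Hab Hcd Ua Uc Ta Tc).
Qed.

Lemma step e u v T1 T2 : 0 < e -> tri_neighbours e u T1 T2 -> Pv e u v T1 -> Pv e u v T2.
Proof.
  intros He [HT1 [HT2 [G [[i [j [Li [Lj [Dij [Uij HG]]]]]] HI]]]] P1.
  apply dist2_sq in Dij; auto.
  assert (Gm : G (mid i j)) by (apply HG; apply mid_seg).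
  apply HI in Gm. destruct Gm as [T1m T2m].
  destruct (P1 i j Li Lj Dij Uij T1m) as [E|E];
  intros c d Lc Ld Hcd Uc Tc;
  destruct (edge_pair e u T2 i j c d He HT2 Li Lj Lc Ld Dij Hcd Uij Uc T2m Tc) as [F|F];
  rewrite F, E; rewrite ?opp3K; auto.
Qed.

Lemma propag e u v T1 T2 : 0 < e -> tri_connected e u T1 T2 -> Pv e u v T1 -> Pv e u v T2.
Proof.
  intros He H. induction H; eauto using step.
Qed.

Theorem lemma5p2 (eps : R) (Omega : pt -> Prop) (u : pt -> vec3) (Rg : pt -> Prop) :
  0 < eps -> open2 Omega -> bounded2 Omega ->
  SF eps Omega u -> admissible_region eps u Rg ->
  let Vals := fun v : vec3 =>
    exists i, in_lattice eps i /\ v = u i /\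
      exists G, in_N eps u G /\ G i /\ (forall x, G x -> Rg x) in
  (forall v, ~ Vals v) \/
  (exists v, on_sphere v /\ forall w, Vals w <-> (w = v \/ w = opp3 v)).
Proof.
  intros He _ _ [Hsph _] [[F [HF1 [HF2 HF3]]] _] Vals.
  destruct (classic (exists w, Vals w)) as [[w0 Hw0]|Hn].
  2:{ left. intros v Hv. apply Hn. eauto. }
  right.
  destruct Hw0 as [i0 [Li0 [_ [G0 [N0 [_ HR0]]]]]].
  destruct N0 as [a0 [b0 [La0 [Lb0 [D0' [U0 HG0]]]]]] eqn:EN0.
  pose proof (dist2_sq _ _ _ He D0') as D0.
  assert (Rm0 : Rg (mid a0 b0)) by (apply HR0, HG0, mid_seg).
  apply HF3 in Rm0. destruct Rm0 as [T0 [FT0 T0m]].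
  assert (P0 : Pv eps u (u a0) T0) by (eapply Pv_of; eauto).
  exists (u a0). split; [apply Hsph; auto|].
  intros w. split.
  - intros [i [Li [-> [G [[a [b [La [Lb [D [U HG]]]]]] [Gi HR]]]]]].
    apply dist2_sq in D; auto.
    assert (Rm : Rg (mid a b)) by (apply HR, HG, mid_seg).
    apply HF3 in Rm. destruct Rm as [T [FT Tm]].
    pose proof (propag eps u (u a0) T0 T He (HF2 _ _ FT0 FT) P0) as P.
    assert (Ub : u b = opp3 (u a)) by (rewrite U, opp3K; reflexivity).
    destruct (P a b La Lb D U Tm) as [E|E];
    (apply HG in Gi; destruct (LS eps i a b He Li La Lb D Gi) as [ -> | -> ]);
    [ left; exact E | right; rewrite Ub, E; reflexivity
    | right; exact E | left; rewrite Ub, E, opp3K; reflexivity ].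
  - assert (U0' : u b0 = opp3 (u a0)) by (rewrite U0, opp3K; reflexivity).
    intros [ -> | -> ].
    + exists a0. split; [auto|]. split; [reflexivity|]. exists G0. split; [exact N0|].
      split; [|exact HR0]. apply HG0. exists 0. split; [lra|].
      destruct a0, b0; simpl; f_equal; ring.
    + exists b0. split; [auto|]. split; [symmetry; exact U0'|]. exists G0. split; [exact N0|].
      split; [|exact HR0]. apply HG0. exists 1. split; [lra|].
      destruct a0, b0; simpl; f_equal; ring.
Qed.
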